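(* For any two graphs $G_1$ and $G_2$, $\chi_L(G_1+G_2)=\chi_{L_2}(G_1)+\chi_{L_2}(G_2)$.
   Context: All graphs are finite and simple (not necessarily connected for $G_1,G_2$). A proper $k$-coloring of $G$ is a map $f$ from $V(G)$ onto $[k]=\{1,\dots,k\}$ with adjacent vertices receiving different colors; for $S\subseteq V(G)$, $f(S)=\{f(u):u\in S\}$, and $N_G(u)$ is the set of neighbors of $u$. A proper $k$-coloring $f$ is a neighbor locating coloring if for any two distinct vertices $u,v$ with $f(u)=f(v)$ we have $f(N_G(u))\ne f(N_G(v))$; the neighbor locating chromatic number $\chi_{L_2}(G)$ is the minimum number of colors in a neighbor locating coloring of $G$. For a connected graph $G$ with proper $k$-coloring $f$ and color classes $V_i=f^{-1}(i)$, the color code of $v$ is $(d(v,V_1),\dots,d(v,V_k))$, where $d(v,S)=\min_{x\in S}d(v,x)$; $f$ is a locating coloring if distinct vertices have distinct color codes, and $\chi_L(G)$ is the minimum number of colors in a locating coloring. The join $G_1+G_2$ is the disjoint union of $G_1$ and $G_2$ together with all edges joining a vertex of $G_1$ to a vertex of $G_2$. *)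

(* Defs.v *)
From mathcomp Require Import all_boot.
Set Implicit Arguments. Unset Strict Implicit. Unset Printing Implicit Defensive.


Record sgraph := SGraph {
  vert : finType;
  adj : rel vert;
  adj_sym : symmetric adj;
  adj_irr : irreflexive adj }.

Definition join_adj (G1 G2 : sgraph) : rel (vert G1 + vert G2)%type :=
  fun x y => match x, y with
  | inl a, inl b => adj a b
  | inr a, inr b => adj a b
  | _, _ => true
  end.

Lemma join_adj_sym (G1 G2 : sgraph) : symmetric (@join_adj G1 G2).
Proof. by case=> [a|a] [b|b] //=; apply: adj_sym. Qed.

Lemma join_adj_irr (G1 G2 : sgraph) : irreflexive (@join_adj G1 G2).
Proof. by case=> a /=; apply: adj_irr. Qed.

Definition join (G1 G2 : sgraph) : sgraph :=
  SGraph (@join_adj_sym G1 G2) (@join_adj_irr G1 G2).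

Section Colorings.
Variable G : sgraph.
Local Notation V := (vert G).
Local Notation e := (@adj G).

(* Colors are 'I_k (i.e. 0..k-1 instead of 1..k). *)
Definition proper_onto k (f : {ffun V -> 'I_k}) : bool :=
  [forall u, forall v, e u v ==> (f u != f v)] &&
  [forall i, exists v, f v == i].

Definition nbhd (u : V) : {set V} := [set w | e u w].

Definition nlc k (f : {ffun V -> 'I_k}) : bool :=
  proper_onto f &&
  [forall u, forall v, ((u != v) && (f u == f v)) ==>
                        (f @: nbhd u != f @: nbhd v)].

Fixpoint walkb (n : nat) (u v : V) : bool :=
  match n with
  | 0 => u == v
  | n'.+1 => [exists w, e u w && walkb n' w v]
  end.

(* graph distance (shortest walk length); for connected graphs this is the
   usual distance since it is < #|V|; unreachable pairs get #|V|. *)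
Definition dist (u v : V) : nat :=
  \big[minn/#|V|]_(n < #|V| | walkb n u v) n.

Definition dist_set (v : V) (S : {set V}) : nat :=
  \big[minn/#|V|]_(x in S) dist v x.

Definition color_code k (f : {ffun V -> 'I_k}) (v : V) : {ffun 'I_k -> nat} :=
  [ffun i => dist_set v (f @^-1: [set i])].

Definition lc k (f : {ffun V -> 'I_k}) : bool :=
  proper_onto f &&
  [forall u, forall v, (u != v) ==> (color_code f u != color_code f v)].


(* minimum number of colors; the bound #|V| is always attained
   (all vertices distinctly colored), so this is the true minimum. *)
Definition chi_L2 : nat :=
  \big[minn/#|V|]_(k < #|V|.+1 | [exists f : {ffun V -> 'I_k}, nlc f]) k.

Definition chi_L : nat :=
  \big[minn/#|V|]_(k < #|V|.+1 | [exists f : {ffun V -> 'I_k}, lc f]) k.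

End Colorings.

(* Main.v *)
Require Import Defs.
From mathcomp Require Import all_boot.
From mathcomp Require Import zify.
Set Implicit Arguments. Unset Strict Implicit. Unset Printing Implicit Defensive.

Lemma bigmin_seq_le (I : Type) (r : seq I) (P : pred I) (F : I -> nat) x0 m :
  (\big[minn/x0]_(i <- r | P i) F i <= m) = (x0 <= m) || has (fun i => P i && (F i <= m)) r.
Proof.
elim: r => [|i r IH]; first by rewrite big_nil orbF.
rewrite big_cons /=; case: (P i) => //=.
by rewrite geq_min IH orbCA.
Qed.

Lemma bigmin_fin_le (I : finType) (P : pred I) (F : I -> nat) x0 m :
  (\big[minn/x0]_(i | P i) F i <= m) = (x0 <= m) || [exists i, P i && (F i <= m)].
Proof.
rewrite bigmin_seq_le; congr (_ || _).
apply/hasP/existsP => [[i _ H]|[i H]]; first by exists i.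
by exists i => //; rewrite mem_index_enum.
Qed.

Lemma bigmin_spec N (P : nat -> bool) k0 : k0 <= N -> P k0 ->
  P (\big[minn/N]_(k < N.+1 | P k) k) /\
  forall k, k <= N -> P k -> \big[minn/N]_(k < N.+1 | P k) k <= k.
Proof.
move=> hk0 Pk0.
have low : forall k, k <= N -> P k -> \big[minn/N]_(k < N.+1 | P k) k <= k.
  move=> k hk Pk; rewrite bigmin_fin_le; apply/orP; right.
  by apply/existsP; exists (Ordinal (hk : k < N.+1)); rewrite /= Pk leqnn.
split=> //.
have: (\big[minn/N]_(k < N.+1 | P k) k == N) || P (\big[minn/N]_(k < N.+1 | P k) k).
  apply: (big_ind (fun x => (x == N) || P x)); first by rewrite eqxx.
    move=> x y hx hy; rewrite /minn; by case: ifP.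
  by move=> i ->; rewrite orbT.
case/orP=> // /eqP E.
have := low _ hk0 Pk0; rewrite E => hN.
have -> : N = k0 by apply/eqP; rewrite eqn_leq hN hk0.
by [].
Qed.

Lemma dist_le (G : sgraph) (u v : vert G) m :
  (dist u v <= m) = (#|vert G| <= m) || [exists n : 'I_#|vert G|, walkb n u v && (n <= m)].
Proof. by rewrite /dist bigmin_fin_le. Qed.

Lemma dist_set_le (G : sgraph) (v : vert G) (S : {set vert G}) m :
  (dist_set v S <= m) = (#|vert G| <= m) || [exists x, (x \in S) && (dist v x <= m)].
Proof. by rewrite /dist_set bigmin_fin_le. Qed.

Lemma gen_nlc (G : sgraph) (T : finType) (g : vert G -> T) (v0 : vert G) :
  (forall u v, adj u v -> g u != g v) ->
  (forall u v, u != v -> g u = g v -> g @: nbhd u != g @: nbhd v) ->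
  exists f : {ffun vert G -> 'I_#|g @: setT|}, nlc f.
Proof.
move=> gP gN.
have gS : forall v, g v \in g @: setT by move=> v; apply: imset_f; rewrite in_setT.
pose h := enum_rank_in (gS v0).
have hK : {in g @: setT, cancel h enum_val} by apply: enum_rankK_in.
have hinj : {in g @: setT &, injective h} by apply: can_in_inj hK.
exists [ffun v => h (g v)].
have back : forall A : {set vert G}, enum_val @: ([ffun v => h (g v)] @: A) = g @: A.
  move=> A; rewrite -imset_comp; apply: eq_in_imset => x _ /=.
  by rewrite ffunE hK ?gS.
apply/andP; split; [apply/andP; split|].
- apply/forallP=> u; apply/forallP=> v; apply/implyP=> huv.
  rewrite !ffunE; apply/negP=> /eqP /hinj E.
  by move: (gP _ _ huv); rewrite E ?gS ?eqxx.
- apply/forallP=> i; have := enum_valP i; case/imsetP=> v _ Ev.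
  apply/existsP; exists v; rewrite ffunE -Ev.
  by rewrite /h enum_valK_in.
- apply/forallP=> u; apply/forallP=> v; apply/implyP=> /andP[huv].
  rewrite !ffunE => /eqP /hinj E.
  have {}E := E (gS u) (gS v).
  apply/negP=> /eqP E2.
  by move: (gN _ _ huv E); rewrite -(back (nbhd u)) -(back (nbhd v)) E2 eqxx.
Qed.

Lemma triv_nlc (G : sgraph) : exists f : {ffun vert G -> 'I_#|vert G|}, nlc f.
Proof.
exists [ffun v => enum_rank v].
apply/andP; split; [apply/andP; split|].
- apply/forallP=> u; apply/forallP=> v; apply/implyP=> huv.
  rewrite !ffunE; apply/negP=> /eqP /enum_rank_inj E.
  by move: huv; rewrite E adj_irr.
- by apply/forallP=> i; apply/existsP; exists (enum_val i); rewrite ffunE enum_valK.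
- apply/forallP=> u; apply/forallP=> v; apply/implyP=> /andP[huv].
  by rewrite !ffunE => /eqP /enum_rank_inj E; move: huv; rewrite E eqxx.
Qed.

Section Join.
Variables (G1 G2 : sgraph) (u1 : vert G1) (u2 : vert G2).
Local Notation J := (join G1 G2).

Lemma cardJ : 1 < #|vert J|.
Proof.
have h1 : 0 < #|vert G1| by apply/card_gt0P; exists u1.
have h2 : 0 < #|vert G2| by apply/card_gt0P; exists u2.
by rewrite /= card_sum; lia.
Qed.

Lemma walk12 (w x : vert J) : walkb 1 w x || walkb 2 w x.
Proof.
case: w => a; case: x => b /=.
- apply/orP; right; apply/existsP; exists (inr u2); apply/andP; split=> //.
  by apply/existsP; exists (inl b); rewrite eqxx.
- by apply/orP; left; apply/existsP; exists (inr b); rewrite eqxx.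
- by apply/orP; left; apply/existsP; exists (inl b); rewrite eqxx.
- apply/orP; right; apply/existsP; exists (inl u1); apply/andP; split=> //.
  by apply/existsP; exists (inr b); rewrite eqxx.
Qed.

Lemma code_join k (f : {ffun vert J -> 'I_k}) (w : vert J) (i : 'I_k) :
  (exists v, f v == i) ->
  color_code f w i =
  if f w == i then 0 else if [exists x, adj w x && (f x == i)] then 1 else 2.
Proof.
move=> [v0 Hv0].
have cJ := cardJ.
rewrite ffunE; set d := dist_set _ _.
have h0 : (d <= 0) = (f w == i).
  rewrite /d dist_set_le; have -> : (#|vert J| <= 0) = false by lia.
  rewrite /=; apply/existsP/idP.
  - case=> x /andP[]; rewrite !inE => xS; rewrite dist_le.
    case/orP=> [|/existsP[[[|n] Hn] /andP[/= wx nle]]]; first by lia.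
      by move/eqP: wx => ->.
    by lia.
  - move=> fw; exists w; rewrite !inE fw /= dist_le; apply/orP; right.
    by apply/existsP; exists (Ordinal (ltnW cJ)); rewrite /= eqxx.
have h1 : (d <= 1) = (f w == i) || [exists x, adj w x && (f x == i)].
  rewrite /d dist_set_le; have -> : (#|vert J| <= 1) = false by lia.
  rewrite /=; apply/existsP/idP.
  - case=> x /andP[]; rewrite !inE => xS; rewrite dist_le.
    case/orP=> [|/existsP[[[|[|n]] Hn] /andP[/= wx nle]]]; first by lia.
    + by move/eqP: wx => ->; rewrite xS.
    + case/existsP: wx => y /andP[wy /eqP yx]; subst y.
      by apply/orP; right; apply/existsP; exists x; rewrite wy xS.
    + by lia.
  - case/orP=> [fw|/existsP[x /andP[wx fx]]].
      exists w; rewrite !inE fw /= dist_le; apply/orP; right.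
      by apply/existsP; exists (Ordinal (ltnW cJ)); rewrite /= eqxx.
    exists x; rewrite !inE fx /= dist_le; apply/orP; right.
    apply/existsP; exists (Ordinal cJ); rewrite /= andbT.
    by apply/existsP; exists x; rewrite wx eqxx.
have h2 : d <= 2.
  rewrite /d dist_set_le; case: (leqP #|vert J| 2) => //= c3.
  apply/existsP; exists v0; rewrite !inE Hv0 /= dist_le; apply/orP; right.
  case/orP: (walk12 w v0) => W.
    by apply/existsP; exists (Ordinal cJ); rewrite W.
  by apply/existsP; exists (Ordinal c3); rewrite W.
case E0: (f w == i); rewrite E0 /= in h0 h1.
  by apply/eqP; rewrite -leqn0 h0.
case E1: [exists x, adj w x && (f x == i)]; rewrite E1 in h1.
  by apply/eqP; rewrite eqn_leq h1 /=; move/negbT: h0; rewrite -ltnNge.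
by apply/eqP; rewrite eqn_leq h2 /=; move/negbT: h1; rewrite -ltnNge.
Qed.

End Join.

Lemma setneq_ex (T : finType) (A B : {set T}) : A != B -> exists c, (c \in A) != (c \in B).
Proof.
move=> hne; case: (boolP [exists c, (c \in A) != (c \in B)]) => [/existsP H|/existsPn H].
  exact: H.
have E : A = B by apply/setP => c; move: (H c); rewrite negbK => /eqP.
by rewrite E eqxx in hne.
Qed.

Section Join2.
Variables (G1 G2 : sgraph) (u1 : vert G1) (u2 : vert G2).
Local Notation J := (join G1 G2).

Lemma adjc_inl k (f : {ffun vert J -> 'I_k}) a i :
  [exists x, adj (inl a : vert J) x && (f x == i)] =
  (i \in (fun b => f (inl b)) @: nbhd a) || [exists y, f (inr y) == i].
Proof.
apply/existsP/orP.
- case=> [[b|b] /andP[h e]].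
    by left; apply/imsetP; exists b; rewrite ?inE // (eqP e).
  by right; apply/existsP; exists b.
- case=> [/imsetP[b bN ->]|/existsP[y e]].
    by exists (inl b); rewrite inE in bN; rewrite /= bN eqxx.
  by exists (inr y); rewrite e.
Qed.

Lemma adjc_inr k (f : {ffun vert J -> 'I_k}) a i :
  [exists x, adj (inr a : vert J) x && (f x == i)] =
  (i \in (fun b => f (inr b)) @: nbhd a) || [exists y, f (inl y) == i].
Proof.
apply/existsP/orP.
- case=> [[b|b] /andP[h e]].
    by right; apply/existsP; exists b.
  by left; apply/imsetP; exists b; rewrite ?inE // (eqP e).
- case=> [/imsetP[b bN ->]|/existsP[y e]].
    by exists (inr b); rewrite inE in bN; rewrite /= bN eqxx.
  by exists (inl y); rewrite e.
Qed.

Lemma lc_onto k (f : {ffun vert J -> 'I_k}) : lc f -> forall i, exists v, f v == i.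
Proof. by case/andP=> /andP[_ /forallP H] _ i; apply/existsP. Qed.

Lemma split_lc k (f : {ffun vert J -> 'I_k}) : lc f ->
  exists k1 k2, [/\ k = k1 + k2, k1 <= #|vert G1|, k2 <= #|vert G2|,
    (exists f1 : {ffun vert G1 -> 'I_k1}, nlc f1) &
    (exists f2 : {ffun vert G2 -> 'I_k2}, nlc f2)].
Proof.
move=> hlc; have on := lc_onto hlc.
have prop : forall x y, adj x y -> f x != f y.
  by case/andP: hlc => /andP[/forallP H _] _ x y; move/forallP: (H x) => /(_ y) /implyP.
move: (hlc) => /andP[_ /forallP hcode].
pose g1 := fun a => f (inl a); pose g2 := fun b => f (inr b).
exists #|g1 @: setT|, #|g2 @: setT|; split.
- have U : g1 @: setT :|: g2 @: setT = [set: 'I_k].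
    apply/setP=> i; rewrite !inE; case: (on i) => [[a|b] /eqP <-].
      by rewrite (imset_f g1) ?inE.
    by rewrite orbC (imset_f g2) ?inE.
  have I : g1 @: setT :&: g2 @: setT = set0.
    apply/setP=> i; rewrite !inE; apply/negP=> /andP[/imsetP[a _ ->] /imsetP[b _ E]].
    by move: (prop (inl a) (inr b) erefl); rewrite -/(g1 a) -/(g2 b) E eqxx.
  by move: (cardsU (g1 @: setT) (g2 @: setT)); rewrite U I cards0 cardsT card_ord subn0.
- by apply: leq_trans (leq_imset_card _ _) _; rewrite cardsT.
- by apply: leq_trans (leq_imset_card _ _) _; rewrite cardsT.
- apply: (gen_nlc u1).
    by move=> u v h; apply: (prop (inl u) (inl v)).
  move=> u v huv E; apply/negP=> /eqP E2.
  have : inl u != inl v :> vert J by [].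
  move/(_ (inl u)): hcode => /forallP /(_ (inl v)) /implyP H /H.
  apply/negP; rewrite negbK; apply/eqP/ffunP=> i.
  rewrite !(code_join u1 u2) // !adjc_inl.
  by rewrite -/g1 E2; move: E; rewrite /g1 => ->.
- apply: (gen_nlc u2).
    by move=> u v h; apply: (prop (inr u) (inr v)).
  move=> u v huv E; apply/negP=> /eqP E2.
  have : inr u != inr v :> vert J by [].
  move/(_ (inr u)): hcode => /forallP /(_ (inr v)) /implyP H /H.
  apply/negP; rewrite negbK; apply/eqP/ffunP=> i.
  rewrite !(code_join u1 u2) // !adjc_inr.
  by rewrite -/g2 E2; move: E; rewrite /g2 => ->.
Qed.

End Join2.

Section Join3.
Variables (G1 G2 : sgraph) (u1 : vert G1) (u2 : vert G2).
Local Notation J := (join G1 G2).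

Lemma nlc_prop (G : sgraph) k (f : {ffun vert G -> 'I_k}) : nlc f ->
  forall x y, adj x y -> f x != f y.
Proof.
by case/andP=> /andP[/forallP H _] _ x y; move/forallP: (H x) => /(_ y) /implyP.
Qed.

Lemma nlc_onto (G : sgraph) k (f : {ffun vert G -> 'I_k}) : nlc f ->
  forall i, exists v, f v == i.
Proof. by case/andP=> /andP[_ /forallP H] _ i; apply/existsP. Qed.

Lemma nlc_nd (G : sgraph) k (f : {ffun vert G -> 'I_k}) : nlc f ->
  forall u v, u != v -> f u = f v -> f @: nbhd u != f @: nbhd v.
Proof.
case/andP=> _ /forallP H u v huv E.
by move/forallP: (H u) => /(_ v) /implyP; apply; rewrite huv E eqxx.
Qed.

Lemma nbhd_col (G : sgraph) k (f : {ffun vert G -> 'I_k}) : nlc f ->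
  forall a c, c \in f @: nbhd a -> f a != c.
Proof.
move=> h a c /imsetP[x]; rewrite inE => ax ->.
exact: nlc_prop h a x ax.
Qed.

Lemma lr_neq k1 k2 (x : 'I_k1) (y : 'I_k2) : lshift k2 x != rshift k1 y.
Proof. by apply/negP=> /eqP/(congr1 val) /=; have := ltn_ord x; lia. Qed.

Lemma join_lc k1 k2 (f1 : {ffun vert G1 -> 'I_k1}) (f2 : {ffun vert G2 -> 'I_k2}) :
  nlc f1 -> nlc f2 ->
  lc ([ffun x : vert J => match x with inl a => lshift k2 (f1 a)
                                  | inr b => rshift k1 (f2 b) end]).
Proof.
move=> h1 h2; set F := [ffun x : vert J => _].
have on : forall i, exists v, F v == i.
  move=> i; case: (splitP i) => [j Hj|j Hj].
    case: (nlc_onto h1 j) => v /eqP Hv; exists (inl v); rewrite ffunE Hv.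
    by apply/eqP/val_inj; rewrite /= Hj.
  case: (nlc_onto h2 j) => v /eqP Hv; exists (inr v); rewrite ffunE Hv.
  by apply/eqP/val_inj; rewrite /= Hj.
apply/andP; split; [apply/andP; split|].
- apply/forallP=> x; apply/forallP=> y; apply/implyP.
  case: x => a; case: y => b /= hab; rewrite !ffunE.
  + by rewrite (inj_eq (@lshift_inj _ _)); exact: nlc_prop h1 a b hab.
  + exact: lr_neq.
  + by rewrite eq_sym; exact: lr_neq.
  + by rewrite (inj_eq (@rshift_inj _ _)); exact: nlc_prop h2 a b hab.
- by apply/forallP=> i; apply/existsP.
apply/forallP=> x; apply/forallP=> y; apply/implyP=> hxy.
apply/negP=> /eqP E.
have hcol : F x = F y.
  move/ffunP: E => /(_ (F x)); rewrite !(code_join u1 u2) // eqxx.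
  by case: eqP => // _; case: ifP.
case: x y hxy hcol E => a [] b hab; rewrite !ffunE => hcol E.
- move/lshift_inj: hcol => hc.
  have hab' : a != b by apply: contra hab => /eqP ->.
  case: (setneq_ex (nlc_nd h1 hab' hc)) => c Hc.
  move/ffunP: E => /(_ (lshift k2 c)); rewrite !(code_join u1 u2) // !adjc_inl.
  have R : forall d, (fun b => F (inl b)) @: nbhd d = lshift k2 @: (f1 @: nbhd d).
    by move=> d; rewrite -imset_comp; apply: eq_imset => z; rewrite ffunE.
  have N : [exists y, F (inr y) == lshift k2 c] = false.
    apply: negbTE; apply/existsPn => z; rewrite ffunE eq_sym; exact: lr_neq.
  rewrite !R !(mem_imset _ _ (@lshift_inj _ _)) !N !orbF !ffunE.
  rewrite !(inj_eq (@lshift_inj _ _)) -hc.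
  case: (f1 a =P c) => [ac|_].
    move: Hc; case Ea: (c \in f1 @: nbhd a); first by move: (nbhd_col h1 Ea); rewrite ac eqxx.
    case Eb: (c \in f1 @: nbhd b) => //; by move: (nbhd_col h1 Eb); rewrite -hc ac eqxx.
  by move: Hc; case: (c \in f1 @: nbhd a); case: (c \in f1 @: nbhd b).
- by move: (lr_neq (f1 a) (f2 b)); rewrite hcol eqxx.
- by move: (lr_neq (f1 b) (f2 a)); rewrite hcol eqxx.
- move/rshift_inj: hcol => hc.
  have hab' : a != b by apply: contra hab => /eqP ->.
  case: (setneq_ex (nlc_nd h2 hab' hc)) => c Hc.
  move/ffunP: E => /(_ (rshift k1 c)); rewrite !(code_join u1 u2) // !adjc_inr.
  have R : forall d, (fun b => F (inr b)) @: nbhd d = @rshift k1 k2 @: (f2 @: nbhd d).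
    by move=> d; rewrite -imset_comp; apply: eq_imset => z; rewrite ffunE.
  have N : [exists y, F (inl y) == rshift k1 c] = false.
    apply: negbTE; apply/existsPn => z; rewrite ffunE; exact: lr_neq.
  rewrite !R !(mem_imset _ _ (@rshift_inj _ _)) !N !orbF !ffunE.
  rewrite !(inj_eq (@rshift_inj _ _)) -hc.
  case: (f2 a =P c) => [ac|_].
    move: Hc; case Ea: (c \in f2 @: nbhd a); first by move: (nbhd_col h2 Ea); rewrite ac eqxx.
    case Eb: (c \in f2 @: nbhd b) => //; by move: (nbhd_col h2 Eb); rewrite -hc ac eqxx.
  by move: Hc; case: (c \in f2 @: nbhd a); case: (c \in f2 @: nbhd b).
Qed.

End Join3.

Theorem theorem1 (G1 G2 : sgraph) :
  0 < #|vert G1| -> 0 < #|vert G2| ->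
  chi_L (join G1 G2) = chi_L2 G1 + chi_L2 G2.
Proof.
move=> /card_gt0P [u1 _] /card_gt0P [u2 _].
have [P1 L1] := @bigmin_spec #|vert G1| (fun k => [exists f : {ffun vert G1 -> 'I_k}, nlc f])
   #|vert G1| (leqnn _) (introT existsP (triv_nlc G1)).
have [P2 L2] := @bigmin_spec #|vert G2| (fun k => [exists f : {ffun vert G2 -> 'I_k}, nlc f])
   #|vert G2| (leqnn _) (introT existsP (triv_nlc G2)).
rewrite /chi_L /chi_L2.
set a := \big[minn/#|vert G1|]_(k < _ | _) _ in P1 L1 *.
set b := \big[minn/#|vert G2|]_(k < _ | _) _ in P2 L2 *.
have ha : a <= #|vert G1| by apply: L1 (leqnn _) (introT existsP (triv_nlc G1)).
have hb : b <= #|vert G2| by apply: L2 (leqnn _) (introT existsP (triv_nlc G2)).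
case/existsP: P1 => f1 hf1; case/existsP: P2 => f2 hf2.
have hJ := join_lc u1 u2 hf1 hf2.
have hab : a + b <= #|vert (join G1 G2)| by rewrite /= card_sum; lia.
have PJ0 : [exists f : {ffun vert (join G1 G2) -> 'I_(a+b)}, lc f].
  by apply/existsP; eexists; exact: hJ.
have [PJ LJ] := @bigmin_spec #|vert (join G1 G2)|
   (fun k => [exists f : {ffun vert (join G1 G2) -> 'I_k}, lc f]) (a + b) hab
   PJ0.
have le1 := LJ _ hab PJ0.
case/existsP: PJ => f hf.
have [k1 [k2 [E hk1 hk2 [g1 hg1] [g2 hg2]]]] := split_lc u1 u2 hf.
have Q1 : [exists f : {ffun vert G1 -> 'I_k1}, nlc f] by apply/existsP; eexists; exact: hg1.
have Q2 : [exists f : {ffun vert G2 -> 'I_k2}, nlc f] by apply/existsP; eexists; exact: hg2.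
have := L1 _ hk1 Q1.
have := L2 _ hk2 Q2.
move: le1 E; set m := \big[minn/_]_(k < _ | _) _; lia.
Qed.
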